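(* Let $A$ be a right noetherian graded algebra and $e\in A$ an idempotent such that $eAe$ is a right noetherian graded algebra. If $Ae\in\mathrm{grmod}\,eAe$ and $(-)e:\mathrm{tails}\,A\to\mathrm{tails}\,eAe$ is an equivalence, then $A/(e)$ is a torsion $A$-module.
   Context: Graded algebras are $\mathbb{N}$-graded algebras over an algebraically closed field $k$. For a graded module $M$, $(-)e$ sends $M$ to $Me$ (i.e. $M\otimes_A Ae$), a graded right $eAe$-module. A graded right $A$-module $M$ is torsion if for every $m\in M$ there is $n$ with $mA_{\ge n}=0$. $\mathrm{grmod}\,B$ is the category of finitely generated graded right $B$-modules, $\mathrm{tails}\,B=\mathrm{grmod}\,B/\mathrm{tors}\,B$ where $\mathrm{tors}\,B$ is the subcategory of finite-dimensional (torsion) modules. $(e)$ is the two-sided ideal generated by $e$. *)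

(* Defs.v *)
From mathcomp Require Import all_boot all_algebra.

Set Implicit Arguments.
Unset Strict Implicit.
Unset Printing Implicit Defensive.

Import GRing.Theory.
Local Open Scope ring_scope.

Section GradedDefs.

Variables (k : closedFieldType) (A : algType k).

Definition is_grading (Ad : nat -> A -> Prop) : Prop :=
  [/\ [/\ (forall n, Ad n 0),
      (forall n a b, Ad n a -> Ad n b -> Ad n (a + b))
    & (forall n (c : k) a, Ad n a -> Ad n (c *: a))],
      (forall i j a b, Ad i a -> Ad j b -> Ad (i + j)%N (a * b)),
      Ad 0%N 1,
      (forall a, exists (m : nat) (c : nat -> A),
          (forall i, Ad i (c i)) /\ a = \sum_(i < m) c i)
    & (forall (m : nat) (c : nat -> A), (forall i, Ad i (c i)) ->
          \sum_(i < m) c i = 0 -> forall i, (i < m)%N -> c i = 0)].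

Definition geq_part (Ad : nat -> A -> Prop) (n : nat) (a : A) : Prop :=
  exists (m : nat) (c : nat -> A),
    (forall i, Ad (n + i)%N (c i)) /\ a = \sum_(i < m) c i.

(** The corner algebra fAf (for f = 1 this is all of A). *)
Definition corner (f a : A) : Prop := f * a * f = a.

Definition right_noetherian_corner (f : A) : Prop :=
  forall I : A -> Prop,
    (forall a, I a -> corner f a) -> I 0 ->
    (forall a b, I a -> I b -> I (a + b)) ->
    (forall a b, I a -> corner f b -> I (a * b)) ->
    exists (n : nat) (g : nat -> A), (forall i, (i < n)%N -> I (g i)) /\
      forall a, I a -> exists c : nat -> A,
        (forall i, corner f (c i)) /\ a = \sum_(i < n) g i * c i.

Definition ideal_gen (e y : A) : Prop :=
  exists (m : nat) (x z : nat -> A), y = \sum_(i < m) x i * e * z i.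

(** A module is the subset [rm_S] of a carrier type,
    with group operations, a right action of A (only its restriction to the
    corner fAf is constrained) and a Z-grading [rm_deg]. *)
Record rawmod := RawMod {
  rm_car : Type;
  rm_S : rm_car -> Prop;
  rm_zero : rm_car;
  rm_add : rm_car -> rm_car -> rm_car;
  rm_opp : rm_car -> rm_car;
  rm_act : rm_car -> A -> rm_car;
  rm_deg : int -> rm_car -> Prop }.

Arguments rm_S : clear implicits.
Arguments rm_deg : clear implicits.
Arguments rm_zero : clear implicits.
Unset Implicit Arguments.

Definition msum (M : rawmod) (s : seq (rm_car M)) : rm_car M :=
  foldr (@rm_add M) (rm_zero M) s.
Arguments msum {M} s.

(** sum_{i = -n}^{n} c i *)
Definition zsum (M : rawmod) (n : nat) (c : int -> rm_car M) : rm_car M :=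
  msum [seq c (i%:Z - n%:Z) | i <- iota 0 (n + n).+1].
Arguments zsum {M} n c.

Definition msub (M : rawmod) (x y : rm_car M) := rm_add x (rm_opp y).
Arguments msub {M} x y.

Definition is_grmod (Ad : nat -> A -> Prop) (f : A) (M : rawmod) : Prop :=
  let S := rm_S M in let z := rm_zero M in let add := @rm_add M in
  let opp := @rm_opp M in let act := @rm_act M in let deg := rm_deg M in
  [/\
      [/\ [/\ S z, (forall x y, S x -> S y -> S (add x y))
            & (forall x, S x -> S (opp x))],
          (forall x y w, S x -> S y -> S w -> add x (add y w) = add (add x y) w),
          (forall x y, S x -> S y -> add x y = add y x),
          (forall x, S x -> add z x = x)
        & (forall x, S x -> add x (opp x) = z)],
      [/\ (forall x a, S x -> corner f a -> S (act x a)),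
          (forall x a b, S x -> corner f a -> corner f b ->
              act x (a + b) = add (act x a) (act x b)),
          (forall x y a, S x -> S y -> corner f a ->
              act (add x y) a = add (act x a) (act y a)),
          (forall x a b, S x -> corner f a -> corner f b ->
              act x (a * b) = act (act x a) b)
        & (forall x, S x -> act x f = x)],
      [/\ (forall i x, deg i x -> S x), (forall i, deg i z),
          (forall i x y, deg i x -> deg i y -> deg i (add x y)),
          (forall i x, deg i x -> deg i (opp x))
        & (forall i j x a, deg i x -> corner f a -> Ad j a ->
              deg (i + j%:Z) (act x a))],
      (forall x, S x -> exists (n : nat) (c : int -> rm_car M),
          (forall i, deg i (c i)) /\ x = zsum n c)
    & (forall (n : nat) (c : int -> rm_car M), (forall i, deg i (c i)) ->
          zsum n c = z -> forall i, (`|i| <= n)%N -> c i = z)].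

Definition fg_mod (f : A) (M : rawmod) : Prop :=
  exists (n : nat) (g : nat -> rm_car M), (forall i, (i < n)%N -> rm_S M (g i)) /\
    forall x, rm_S M x -> exists c : nat -> A, (forall i, corner f (c i)) /\
      x = msum [seq rm_act (g i) (c i) | i <- iota 0 n].

Definition in_grmod (Ad : nat -> A -> Prop) (f : A) M := is_grmod Ad f M /\ fg_mod f M.

Definition torsion_el (Ad : nat -> A -> Prop) (f : A) (M : rawmod)
  (x : rm_car M) : Prop :=
  exists n, forall a, corner f a -> geq_part Ad n a -> rm_act x a = rm_zero M.

Definition tau (Ad : nat -> A -> Prop) (f : A) (M : rawmod) (x : rm_car M) :=
  rm_S M x /\ torsion_el Ad f M x.

Definition eqmod (Ad : nat -> A -> Prop) (f : A) (M : rawmod) (x y : rm_car M) := tau Ad f M (msub x y).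

Definition is_gsub (Ad : nat -> A -> Prop) (f : A) (M : rawmod) (P : rm_car M -> Prop) : Prop :=
  [/\ (forall x, P x -> rm_S M x) /\ P (rm_zero M),
      (forall x y, P x -> P y -> P (rm_add x y)),
      (forall x, P x -> P (rm_opp x)),
      (forall x a, P x -> corner f a -> P (rm_act x a))
    & (forall x, P x -> exists (n : nat) (c : int -> rm_car M),
          (forall i, rm_deg M i (c i) /\ P (c i)) /\ x = zsum n c)].

Definition cotorsion (Ad : nat -> A -> Prop) (f : A) (M : rawmod) (P : rm_car M -> Prop) : Prop :=
  forall x, rm_S M x -> exists n, forall a, corner f a -> geq_part Ad n a ->
    P (rm_act x a).

(** A representative (P, phi) of a morphism pi M -> pi N in tails fAf:
    a graded morphism P -> N / tau N with P <= M, M/P torsion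
    (phi gives representatives of the values). *)
Definition is_trep (Ad : nat -> A -> Prop) (f : A) (M N : rawmod) (P : rm_car M -> Prop)
  (phi : rm_car M -> rm_car N) : Prop :=
  [/\ is_gsub Ad f M P /\ cotorsion Ad f M P,
      (forall x, P x -> rm_S N (phi x)),
      (forall x y, P x -> P y ->
          eqmod Ad f N (phi (rm_add x y)) (rm_add (phi x) (phi y))),
      (forall x a, P x -> corner f a ->
          eqmod Ad f N (phi (rm_act x a)) (rm_act (phi x) a))
    & (forall i x, P x -> rm_deg M i x ->
          exists y, rm_deg N i y /\ eqmod Ad f N (phi x) y)].

(** Equality of morphisms in tails (colimit identification). *)
Definition trep_eq (Ad : nat -> A -> Prop) (f : A) (M N : rawmod) (P1 : rm_car M -> Prop)
  (phi1 : rm_car M -> rm_car N) (P2 : rm_car M -> Prop)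
  (phi2 : rm_car M -> rm_car N) : Prop :=
  exists P3, [/\ is_gsub Ad f M P3, cotorsion Ad f M P3 &
    forall x, P3 x -> [/\ P1 x, P2 x & eqmod Ad f N (phi1 x) (phi2 x)]].

(** (Q, psi) o (P, phi) = (R, chi) in tails. *)
Definition trep_comp_eq (Ad : nat -> A -> Prop) (f : A) (M N L : rawmod)
  (P : rm_car M -> Prop) (phi : rm_car M -> rm_car N)
  (Q : rm_car N -> Prop) (psi : rm_car N -> rm_car L)
  (R : rm_car M -> Prop) (chi : rm_car M -> rm_car L) : Prop :=
  exists P3, [/\ is_gsub Ad f M P3, cotorsion Ad f M P3 &
    forall x, P3 x -> [/\ P x, R x & exists q, [/\ Q q, eqmod Ad f N (phi x) q
                                                  & eqmod Ad f L (psi q) (chi x)]]].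

Definition mod_e (e : A) (M : rawmod) : rawmod :=
  @RawMod (rm_car M) (fun x => rm_S M x /\ rm_act x e = x) (rm_zero M)
    (@rm_add M) (@rm_opp M) (@rm_act M)
    (fun i x => rm_deg M i x /\ rm_act x e = x).

Definition sub_e (e : A) (M : rawmod) (P : rm_car M -> Prop) : rm_car M -> Prop :=
  fun x => P x /\ rm_act x e = x.

Definition map_e (e : A) (M N : rawmod) (phi : rm_car M -> rm_car N) :
  rm_car M -> rm_car N := fun x => rm_act (phi x) e.

Arguments sub_e e {M} P.
Arguments map_e e {M N} phi.

Definition tails_e_equivalence (Ad : nat -> A -> Prop) (e : A) : Prop :=
  [/\
      (forall M N : rawmod, in_grmod Ad 1 M -> in_grmod Ad 1 N ->
        forall (Q : rm_car M -> Prop) (psi : rm_car M -> rm_car N),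
          is_trep Ad e (mod_e e M) (mod_e e N) Q psi ->
          exists (P : rm_car M -> Prop) (phi : rm_car M -> rm_car N),
            is_trep Ad 1 M N P phi /\
            trep_eq Ad e (mod_e e M) (mod_e e N)
              (sub_e e P) (map_e e phi) Q psi),
      (forall M N : rawmod, in_grmod Ad 1 M -> in_grmod Ad 1 N ->
        forall (P1 P2 : rm_car M -> Prop) (phi1 phi2 : rm_car M -> rm_car N),
          is_trep Ad 1 M N P1 phi1 -> is_trep Ad 1 M N P2 phi2 ->
          trep_eq Ad e (mod_e e M) (mod_e e N)
            (sub_e e P1) (map_e e phi1) (sub_e e P2) (map_e e phi2) ->
          trep_eq Ad 1 M N P1 phi1 P2 phi2)
    &
      (forall N : rawmod, in_grmod Ad e N ->
        exists M : rawmod, in_grmod Ad 1 M /\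
        exists (P : rm_car M -> Prop) (alpha : rm_car M -> rm_car N)
               (Q : rm_car N -> Prop) (beta : rm_car N -> rm_car M),
          [/\ is_trep Ad e (mod_e e M) N P alpha,
              is_trep Ad e N (mod_e e M) Q beta,
              trep_comp_eq Ad e (mod_e e M) N (mod_e e M) P alpha Q beta
                (rm_S (mod_e e M)) id
            & trep_comp_eq Ad e N (mod_e e M) N Q beta P alpha (rm_S N) id])].

End GradedDefs.

Arguments is_grading {k A}.
Arguments geq_part {k A}.
Arguments corner {k A}.
Arguments right_noetherian_corner {k A}.
Arguments ideal_gen {k A}.
Arguments is_grmod {k A}.
Arguments fg_mod {k A}.
Arguments in_grmod {k A}.
Arguments torsion_el {k A}.
Arguments tau {k A}.
Arguments eqmod {k A}.
Arguments is_gsub {k A}.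
Arguments cotorsion {k A}.
Arguments is_trep {k A}.
Arguments trep_eq {k A}.
Arguments trep_comp_eq {k A}.
Arguments mod_e {k A}.
Arguments tails_e_equivalence {k A}.
Arguments msum {k A M} s.
Arguments zsum {k A M} n c.
Arguments msub {k A M} x y.
Arguments sub_e {k A} e {M} P.
Arguments map_e {k A} e {M N} phi.

(* Main.v *)
Require Import Defs.
From mathcomp Require Import all_boot all_algebra.
From mathcomp Require Import zify.
From Stdlib Require Import ClassicalEpsilon FunctionalExtensionality PropExtensionality.
Import GRing.Theory.
Local Open Scope ring_scope.

Section Main.
Variables (k : closedFieldType) (A : algType k) (Ad : nat -> A -> Prop) (e : A).
Hypothesis hgr : is_grading Ad.
Hypothesis he0 : Ad 0%N e.

Notation I := (ideal_gen e).

Lemma I0 : I 0.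
Proof. by exists 0%N, (fun _ => 0), (fun _ => 0); rewrite big_ord0. Qed.

Lemma ID x y : I x -> I y -> I (x + y).
Proof.
move=> [m1 [x1 [z1 ->]]] [m2 [x2 [z2 ->]]].
exists (m1 + m2)%N, (fun i => if (i < m1)%N then x1 i else x2 (i - m1)%N),
  (fun i => if (i < m1)%N then z1 i else z2 (i - m1)%N).
rewrite big_split_ord /=; congr (_ + _); apply: eq_bigr => i _ /=.
  by rewrite ltn_ord.
by rewrite ltnNge leq_addr /= addKn.
Qed.

Lemma IN x : I x -> I (- x).
Proof.
move=> [m [x1 [z1 ->]]]; exists m, (fun i => - x1 i), z1.
by rewrite -sumrN; apply: eq_bigr => i _; rewrite !mulNr.
Qed.

Lemma IB x y : I x -> I y -> I (x - y).
Proof. by move=> hx hy; apply: ID => //; apply: IN. Qed.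

Arguments ID {x y}. Arguments IN {x}. Arguments IB {x y}.
Lemma IMr x c : I x -> I (x * c).
Proof.
move=> [m [x1 [z1 ->]]]; exists m, x1, (fun i => z1 i * c).
by rewrite mulr_suml; apply: eq_bigr => i _; rewrite mulrA.
Qed.

Lemma IMl c x : I x -> I (c * x).
Proof.
move=> [m [x1 [z1 ->]]]; exists m, (fun i => c * x1 i), z1.
by rewrite mulr_sumr; apply: eq_bigr => i _; rewrite !mulrA.
Qed.

Arguments IMr {x} c. Arguments IMl c {x}.
Lemma Ie : I e.
Proof. by exists 1%N, (fun _ => 1), (fun _ => 1); rewrite big_ord1 mul1r mulr1. Qed.

Lemma Isum n (F : 'I_n -> A) : (forall i, I (F i)) -> I (\sum_(i < n) F i).
Proof. by move=> h; apply: big_ind => //; [apply: I0 | move=> ? ? ? ?; exact: ID]. Qed.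

Lemma Isum_seq (s : seq nat) (F : nat -> A) : (forall i, I (F i)) -> I (\sum_(i <- s) F i).
Proof. by move=> h; apply: big_ind => //; [apply: I0 | move=> ? ? ? ?; exact: ID]. Qed.

Lemma Ad0 n : Ad n 0.
Proof. by case: hgr => -[] h _ _ _ _ _ _; apply: h. Qed.
Lemma AdD n x y : Ad n x -> Ad n y -> Ad n (x + y).
Proof. by case: hgr => -[] _ h _ _ _ _ _; apply: h. Qed.
Lemma AdZ n c x : Ad n x -> Ad n (c *: x).
Proof. by case: hgr => -[] _ _ h _ _ _ _; apply: h. Qed.
Lemma AdN n x : Ad n x -> Ad n (- x).
Proof. by move=> h; rewrite -scaleN1r; apply: AdZ. Qed.
Lemma AdM i j x y : Ad i x -> Ad j y -> Ad (i + j) (x * y).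
Proof. by case: hgr => _ h _ _ _; apply: h. Qed.
Arguments AdM {i j x y}.
Lemma Addec x : exists m (c : nat -> A), (forall i, Ad i (c i)) /\ x = \sum_(i < m) c i.
Proof. by case: hgr => _ _ _ h _; apply: h. Qed.
Lemma Aduniq (m : nat) (c : nat -> A) : (forall i, Ad i (c i)) ->
          \sum_(i < m) c i = 0 -> forall i, (i < m)%N -> c i = 0.
Proof. by case: hgr => _ _ _ _ h; apply: h. Qed.

Definition trunc m (c : nat -> A) i := if (i < m)%N then c i else 0.

Lemma trunc_hom m c : (forall i, Ad i (c i)) -> forall i, Ad i (trunc m c i).
Proof. by move=> h i; rewrite /trunc; case: ifP => _; [apply: h | apply: Ad0]. Qed.
Arguments trunc_hom {m c}.

Lemma sum_trunc m M c : (m <= M)%N -> \sum_(i < M) trunc m c i = \sum_(i < m) c i.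
Proof.
move=> le; rewrite -(subnKC le) big_split_ord /= [X in _ + X]big1 ?addr0.
  by apply: eq_bigr => i _; rewrite /trunc ltn_ord.
by move=> i _; rewrite /trunc ltnNge leq_addr.
Qed.

Lemma uniq_dec m c m' c' : (forall i, Ad i (c i)) -> (forall i, Ad i (c' i)) ->
  \sum_(i < m) c i = \sum_(i < m') c' i -> forall d, trunc m c d = trunc m' c' d.
Proof.
move=> hc hc' eq d.
set M := maxn m m'.
have h := @Aduniq M (fun i => trunc m c i - trunc m' c' i).
case: (ltnP d M) => [lt|ge].
  have hh : trunc m c d - trunc m' c' d = 0.
    apply: (h _ _ d lt).
      by move=> i; apply: AdD; [apply: trunc_hom | apply: AdN; apply: trunc_hom].
    by rewrite sumrB !sum_trunc ?leq_maxl ?leq_maxr // eq subrr.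
  by move/eqP: hh; rewrite subr_eq0 => /eqP.
rewrite /trunc.
have -> : (d < m)%N = false by apply/negbTE; rewrite -leqNgt; apply: leq_trans ge; apply: leq_maxl.
have -> : (d < m')%N = false by apply/negbTE; rewrite -leqNgt; apply: leq_trans ge; apply: leq_maxr.
by [].
Qed.


Definition dec (x : A) : {m : nat & {c : nat -> A | (forall i, Ad i (c i)) /\ x = \sum_(i < m) c i}} :=
  let H := constructive_indefinite_description _ (Addec x) in
  existT _ (proj1_sig H) (constructive_indefinite_description _ (proj2_sig H)).

Definition pi d x := trunc (projT1 (dec x)) (sval (projT2 (dec x))) d.

Lemma pi_uniq x m c : (forall i, Ad i (c i)) -> x = \sum_(i < m) c i ->
  forall d, pi d x = trunc m c d.
Proof.
move=> hc ex d; rewrite /pi; case: (dec x) => m0 [c0 [h0 e0]] /=.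
by apply: uniq_dec => //; rewrite -e0 -ex.
Qed.
Arguments pi_uniq {x m c}.

Lemma pi_homog d x : Ad d (pi d x).
Proof. by rewrite /pi; case: (dec x) => m0 [c0 [h0 e0]] /=; apply: trunc_hom. Qed.

Lemma pi_hom j h d : Ad j h -> pi d h = if d == j then h else 0.
Proof.
move=> hj; rewrite (@pi_uniq h j.+1 (fun i => if i == j then h else 0)).
- rewrite /trunc; case: eqP => [->|_]; first by rewrite ltnSn.
  by case: ifP.
- by move=> i; case: eqP => [->//|_]; apply: Ad0.
- rewrite big_ord_recr /= eqxx big1 ?add0r // => i _.
  by rewrite ltn_eqF.
Qed.

Lemma pi0 d : pi d 0 = 0.
Proof. by rewrite (@pi_hom 0 0 d (Ad0 _)); case: ifP. Qed.

Lemma pi_add d x y : pi d (x + y) = pi d x + pi d y.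
Proof.
have [mx [cx [hx ex]]] := Addec x; have [my [cy [hy ey]]] := Addec y.
set M := maxn mx my.
rewrite (pi_uniq hx ex) (pi_uniq hy ey).
rewrite (@pi_uniq (x + y) M (fun i => trunc mx cx i + trunc my cy i)).
- rewrite /trunc; case: ltnP => // ge.
  have -> : (d < mx)%N = false by apply/negbTE; rewrite -leqNgt; apply: leq_trans ge; apply: leq_maxl.
  have -> : (d < my)%N = false by apply/negbTE; rewrite -leqNgt; apply: leq_trans ge; apply: leq_maxr.
  by rewrite addr0.
- by move=> i; apply: AdD; apply: trunc_hom.
- by rewrite big_split /= !sum_trunc ?leq_maxl ?leq_maxr // -ex -ey.
Qed.

Lemma pi_sum d n (F : 'I_n -> A) : pi d (\sum_(i < n) F i) = \sum_(i < n) pi d (F i).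
Proof.
elim/big_rec2: _ => [|i y1 y2 _ IH]; first by rewrite pi0.
by rewrite pi_add IH.
Qed.

Lemma pi_sum_seq d (s : seq nat) (F : nat -> A) : pi d (\sum_(i <- s) F i) = \sum_(i <- s) pi d (F i).
Proof.
elim/big_rec2: _ => [|i y1 y2 _ IH]; first by rewrite pi0.
by rewrite pi_add IH.
Qed.

Lemma pi_mull {j h} y d : Ad j h ->
  pi d (h * y) = if (j <= d)%N then h * pi (d - j) y else 0.
Proof.
move=> hj; have [m [c [hc ey]]] := Addec y.
rewrite (pi_uniq hc ey).
set F := fun t => if (j <= t)%N then h * trunc m c (t - j) else 0.
rewrite (@pi_uniq (h * y) (j + m) F).
- rewrite /trunc /F; case: (leqP j d) => hjd; last by case: ifP.
  case: ltnP => hd.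
    by rewrite /trunc.
  have -> : (d - j < m)%N = false by lia.
  by rewrite mulr0.
- move=> t; rewrite /F; case: leqP => ht; last by apply: Ad0.
  by have := AdM hj (trunc_hom hc (t - j)); rewrite subnKC.
- rewrite big_split_ord /= big1 ?add0r; last first.
    by move=> i _; rewrite /F leqNgt ltn_ord.
  rewrite ey mulr_sumr; apply: eq_bigr => i _.
  by rewrite /F leq_addr addKn /trunc ltn_ord.
Qed.

Lemma pi_ideal d y : I y -> I (pi d y).
Proof.
move=> [r [x [z ->]]]; rewrite pi_sum; apply: Isum => i.
have [m [c [hc ex]]] := Addec (x i).
rewrite ex !mulr_suml pi_sum; apply: Isum => l.
have hce : Ad l (c l * e) by have := AdM (hc l) he0; rewrite addn0.
rewrite (pi_mull (z i) d hce); case: ifP => _; last by apply: I0.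
by exists 1%N, (fun _ => c l), (fun _ => pi (d - l) (z i)); rewrite big_ord1.
Qed.


Lemma gp_hom {n d h} : Ad d h -> (n <= d)%N -> geq_part Ad n h.
Proof.
move=> hh le; exists (d - n).+1, (fun i => if i == (d - n)%N then h else 0); split.
  move=> i; case: eqP => [->|_]; last by apply: Ad0.
  by rewrite subnKC.
rewrite big_ord_recr /= eqxx big1 ?add0r // => i _.
by rewrite ltn_eqF.
Qed.

Lemma bounded : right_noetherian_corner (1 : A) ->
  (exists n0, forall b, geq_part Ad n0 b -> exists m, forall c, geq_part Ad m c -> I (b * c)) ->
  exists N, forall b, geq_part Ad N b -> I b.
Proof.
move=> noeth [n0 Hn0].
pose Good y := exists B, forall d, (B <= d)%N -> forall w, I (pi d (y * w)).
have [n [g [hg hgen]]] : exists (n : nat) (g : nat -> A), (forall i, (i < n)%N -> Good (g i)) /\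
      forall a, Good a -> exists c : nat -> A,
        (forall i, corner 1 (c i)) /\ a = \sum_(i < n) g i * c i.
  apply: noeth.
  - by move=> a _; rewrite /corner mul1r mulr1.
  - by exists 0%N => d _ w; rewrite mul0r pi0; apply: I0.
  - move=> a b [B1 h1] [B2 h2]; exists (maxn B1 B2) => d hd w.
    rewrite mulrDl pi_add; apply: ID; [apply: h1 | apply: h2] => //.
      by apply: leq_trans hd; apply: leq_maxl.
    by apply: leq_trans hd; apply: leq_maxr.
  - by move=> a b [B h] _; exists B => d hd w; rewrite -mulrA; apply: h.
have [B hB] : exists B, forall i, (i < n)%N -> forall d, (B <= d)%N -> forall w, I (pi d (g i * w)).
  move: hg; elim: n {hgen} => [|n IH] hg; first by exists 0%N.
  have [B1 h1] := IH (fun i hi => hg i (ltnW hi)).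
  have [B2 h2] := hg n (ltnSn n).
  exists (maxn B1 B2) => i hi d hd w.
  case: (ltngtP i n) => [lt|gt|->].
  - by apply: h1 => //; apply: leq_trans hd; apply: leq_maxl.
  - by move: hi; rewrite ltnS leqNgt gt.
  - by apply: h2; apply: leq_trans hd; apply: leq_maxr.
have hhom : forall d h, Ad d h -> (maxn n0 B <= d)%N -> I h.
  move=> d h hh hd.
  have [m hm] := Hn0 h (gp_hom hh (leq_trans (leq_maxl _ _) hd)).
  have gh : Good h.
    exists (d + m)%N => d' hd' w.
    rewrite (pi_mull w d' hh).
    have -> : (d <= d')%N by lia.
    apply: hm; apply: (gp_hom (pi_homog _ _)); lia.
  have [c [_ hc]] := hgen h gh.
  have <- : pi d h = h by rewrite (pi_hom _ _ d hh) eqxx.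
  rewrite hc pi_sum; apply: Isum => i; apply: hB => //.
  by apply: leq_trans hd; apply: leq_maxr.
exists (maxn n0 B) => b [r [c [hc ->]]].
apply: Isum => i; apply: (hhom _ _ (hc i)); apply: leq_addr.
Qed.


Definition C (x : A) : A -> Prop := fun y => I (x - y).

Lemma CE x y : C x = C y <-> I (x - y).
Proof.
split.
  move=> h; have : C y y by rewrite /C subrr; apply: I0.
  by rewrite -h.
move=> h; apply: functional_extensionality => w; apply: propositional_extensionality.
rewrite /C; split => hw.
  by have := IB hw h; rewrite opprB addrC addrA subrK.
by have := ID h hw; rewrite addrA subrK.
Qed.

Definition rep (X : A -> Prop) : A := epsilon (inhabits 0) (fun x => X = C x).

Lemma rep_C x : I (rep (C x) - x).
Proof.
have := epsilon_spec (inhabits 0) (fun y => C x = C y) (ex_intro _ x erefl).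
rewrite -/(rep (C x)) => /CE h.
by have := IN h; rewrite opprB.
Qed.

Lemma addC x y : C (rep (C x) + rep (C y)) = C (x + y).
Proof.
apply/CE; rewrite opprD addrACA; exact: ID (rep_C x) (rep_C y).
Qed.

Lemma oppC x : C (- rep (C x)) = C (- x).
Proof. by apply/CE; rewrite opprK addrC -opprB; exact: IN (rep_C x). Qed.

Lemma actC x a : C (rep (C x) * a) = C (x * a).
Proof. by apply/CE; rewrite -mulrBl; exact: IMr a (rep_C x). Qed.

Definition degQ (i : int) (X : A -> Prop) : Prop :=
  match i with Posz d => exists x, Ad d x /\ X = C x | Negz _ => X = C 0 end.

Definition Q : rawmod A := @RawMod k A (A -> Prop) (fun X => exists x, X = C x) (C 0)
  (fun X Y => C (rep X + rep Y)) (fun X => C (- rep X)) (fun X a => C (rep X * a)) degQ.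

Lemma msum_C (s : seq nat) (f : nat -> A) :
  @msum k A Q [seq C (f i) | i <- s] = C (\sum_(i <- s) f i).
Proof.
elim: s => [|i s IH]; first by rewrite big_nil.
rewrite big_cons -addC.
transitivity (C (rep (C (f i)) + rep (@msum k A Q [seq C (f i) | i <- s]))); first by [].
by rewrite IH.
Qed.


Lemma degQ0 i : degQ i (C 0).
Proof. by case: i => [d|d] //=; exists 0; split => //; apply: Ad0. Qed.

Lemma sum_iota_pick a N K (x : A) : (a <= K)%N -> (K < a + N)%N ->
  \sum_(k <- iota a N) (if k == K then x else 0) = x.
Proof.
elim: N a => [|N IH] a h1 h2; first by lia.
rewrite /= big_cons; case: (eqVneq a K) => [<-|ne].
  rewrite ?eqxx big1_seq ?addr0 // => t /andP[_]; rewrite mem_iota => /andP[hk _].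
  by have -> : (t == a) = false by lia.
rewrite add0r IH //; lia.
Qed.

Definition gq m (c : nat -> A) (j : int) : A :=
  match j with Posz d => trunc m c d | Negz _ => 0 end.

Lemma Q_decomp X : (exists x, X = C x) -> exists (n : nat) (c : int -> A -> Prop),
  (forall i, degQ i (c i)) /\ X = @zsum k A Q n c.
Proof.
move=> [x ->]; have [m [c [hc ex]]] := Addec x.
exists m, (fun j => C (gq m c j)); split.
  by case=> [d|d] //=; exists (trunc m c d); split => //; apply: trunc_hom.
transitivity (C (\sum_(i <- iota 0 (m + m).+1) gq m c (i%:Z - m%:Z))); last first.
  by rewrite /zsum -(msum_C _ (fun i => gq m c (i%:Z - m%:Z))).
congr C; rewrite -addnS iotaD big_cat big1_seq ?add0r; last first.
  move=> i /andP[_]; rewrite mem_iota => /andP[_ hi].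
  case E: (i%:Z - m%:Z) => [j|j] //=; lia.
have -> : iota (0 + m) m.+1 = [seq m + i | i <- iota 0 m.+1]%N.
  by rewrite add0n -{1}(addn0 m) iotaDl.
rewrite big_map.
rewrite (eq_bigr (fun i => trunc m c i)); last first.
  by move=> i _; have -> : ((m + i)%N%:Z - m%:Z) = i%:Z by lia.
have -> : iota 0 m.+1 = index_iota 0 m.+1 by rewrite /index_iota subn0.
rewrite big_mkord sum_trunc // -ex. by rewrite /= add0r.
Qed.

Lemma Q_uniq (n : nat) (c : int -> A -> Prop) : (forall i, degQ i (c i)) ->
  @zsum k A Q n c = C 0 -> forall i, (`|i| <= n)%N -> c i = C 0.
Proof.
move=> hc H.
pose g j := epsilon (inhabits 0) (fun x => c j = C x /\
   match j with Posz d => Ad d x | Negz _ => x = 0 end).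
have hg : forall j, c j = C (g j) /\ match j with Posz d => Ad d (g j) | Negz _ => g j = 0 end.
  move=> j; apply: (epsilon_spec (inhabits 0) (fun x => c j = C x /\
     match j with Posz d => Ad d x | Negz _ => x = 0 end)).
  move: (hc j); case: j => [d|d] /=; first by move=> [x [hx ->]]; exists x.
  by move=> ->; exists 0.
have ec : c = fun j => C (g j).
  by apply: functional_extensionality => j; case: (hg j).
have hz : I (\sum_(i <- iota 0 (n + n).+1) g (i%:Z - n%:Z)).
  have : C (\sum_(i <- iota 0 (n + n).+1) g (i%:Z - n%:Z)) = C 0.
    by rewrite -H ec /zsum -(msum_C _ (fun i => g (i%:Z - n%:Z))).
  by move/CE; rewrite subr0.
case=> [d|d] hi; last by case: (hg (Negz d)) => -> ->.
have := pi_ideal d _ hz; rewrite pi_sum_seq.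
rewrite (eq_bigr (fun i => if i == (d + n)%N then g (Posz d) else 0)); last first.
  move=> i _; case E: (i%:Z - n%:Z) => [j|j].
    case: (hg (Posz j)) => _ hj; rewrite (pi_hom _ _ d hj).
    have -> : (i == (d + n)%N) = (d == j).
      by apply/eqP/eqP => h; lia.
    by case: eqP => [->|].
  case: (hg (Negz j)) => _ ->; rewrite pi0.
  have -> : (i == (d + n)%N) = false by rewrite NegzE in E; lia.
  by [].
rewrite sum_iota_pick //; last by rewrite /= in hi; lia.
by case: (hg (Posz d)) => -> _ hI; apply/CE; rewrite subr0.
Qed.


Lemma Q_grmod : is_grmod Ad 1 Q.
Proof.
rewrite /is_grmod /=; split.
- split; first split.
  + by exists 0.
  + by move=> _ _ [x ->] [y ->]; rewrite addC; exists (x + y).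
  + by move=> _ [x ->]; rewrite oppC; exists (- x).
  + by move=> _ _ _ [x ->] [y ->] [w ->]; rewrite (addC y w) (addC x y) !addC addrA.
  + by move=> _ _ [x ->] [y ->]; rewrite !addC addrC.
  + by move=> _ [x ->]; rewrite addC add0r.
  + by move=> _ [x ->]; rewrite oppC addC subrr.
- split.
  + by move=> _ a [x ->] _; rewrite actC; exists (x * a).
  + by move=> _ a b [x ->] _ _; rewrite !actC addC mulrDr.
  + by move=> _ _ a [x ->] [y ->] _; rewrite (addC x y) !actC addC mulrDl.
  + by move=> _ a b [x ->] _ _; rewrite (actC x a) !actC mulrA.
  + by move=> _ [x ->]; rewrite actC mulr1.
- split.
  + by case=> [d|d] X /=; [move=> [x [_ ->]]; exists x | move=> ->; exists 0].
  + by move=> i; apply: degQ0.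
  + case=> [d|d] X Y /=.
      move=> [x [hx ->]] [y [hy ->]]; exists (x + y); split; last by rewrite addC.
      by apply: AdD.
    by move=> -> ->; rewrite addC addr0.
  + case=> [d|d] X /=.
      by move=> [x [hx ->]]; exists (- x); split; [apply: AdN | rewrite oppC].
    by move=> ->; rewrite oppC oppr0.
  + case=> [d|d] j X a /=.
      move=> [x [hx ->]] _ ha; rewrite actC; exists (x * a); split => //.
      by apply: AdM.
    by move=> -> _ _; rewrite actC mul0r; apply: degQ0.
- exact: Q_decomp.
- exact: Q_uniq.
Qed.

Lemma Q_fg : fg_mod 1 Q.
Proof.
exists 1%N, (fun _ => C 1); split; first by move=> i _; exists 1.
move=> _ [x ->]; exists (fun _ => x); split; first by move=> i; rewrite /corner mul1r mulr1.
rewrite /= /msum /=.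
transitivity (C (rep (C (rep (C 1) * x)) + rep (C 0))); last by [].
by rewrite actC addC mul1r addr0.
Qed.


Notation SQ := (@rm_S k A Q).
Lemma act0 a : C (rep (C 0) * a) = C 0.
Proof. by rewrite actC mul0r. Qed.

Lemma sub00 : C (rep (C 0) + rep (C (- rep (C 0)))) = C 0.
Proof. by rewrite oppC oppr0 addC addr0. Qed.

Lemma corner1 (a : A) : corner 1 a.
Proof. by rewrite /corner mul1r mulr1. Qed.

Lemma tau0 f : tau Ad f Q (C 0).
Proof. by split; [exists 0 | exists 0%N => a _ _; rewrite /= act0]. Qed.

Lemma eqmod_refl f u : SQ u -> eqmod Ad f Q u u.
Proof.
case: Q_grmod => -[_ _ _ _ hinv] _ _ _ _ hu.
by rewrite /eqmod /msub hinv //; apply: tau0.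
Qed.

Lemma zsum0 : @zsum k A Q 0 (fun _ => C 0) = C 0.
Proof.
transitivity (@msum k A Q [seq C ((fun _ => 0) i) | i <- iota 0 1]); first by [].
by rewrite msum_C big_cons big_nil addr0.
Qed.

Lemma key : tails_e_equivalence Ad e ->
  exists n0, forall b, geq_part Ad n0 b -> exists m, forall c, geq_part Ad m c -> I (b * c).
Proof.
case=> _ faith _.
have hQ : in_grmod Ad 1 Q := conj Q_grmod Q_fg.
have [[[hz hadd hopp] _ _ _ hinv] [hact _ _ _ _] [hdS _ _ _ _] hdec _] := Q_grmod.
have gs : is_gsub Ad 1 Q (SQ) /\ cotorsion Ad 1 Q (SQ).
  split; last by move=> x hx; exists 0%N => a _ _; apply: hact => //; apply: corner1.
  split => //.
  - move=> x hx; have [n [c [hc ex]]] := hdec x hx.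
    by exists n, c; split => // i; split => //; apply: (hdS i).
have tr1 : is_trep Ad 1 Q Q (SQ) id.
  split => //.
  - by move=> x y hx hy; apply: eqmod_refl; apply: hadd.
  - by move=> x a hx _; apply: eqmod_refl; apply: hact => //; apply: corner1.
  - by move=> i x hx hd; exists x; split => //; apply: eqmod_refl.
have tr2 : is_trep Ad 1 Q Q (SQ) (fun _ => C 0).
  split => //.
  - by move=> x y _ _; rewrite /= addC addr0; apply: eqmod_refl.
  - by move=> x a _ _; rewrite /= act0; apply: eqmod_refl.
  - by move=> i x _ _; exists (C 0); split; [apply: degQ0 | apply: eqmod_refl].
have teq : trep_eq Ad e (mod_e e Q) (mod_e e Q) (sub_e e (SQ)) (@map_e k A e Q Q id)
    (sub_e e (SQ)) (@map_e k A e Q Q (fun _ => C 0)).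
  exists (fun X => X = C 0); split.
  - split => /=.
    + by split => // x ->; split; [exists 0 | rewrite act0].
    + by move=> x y -> ->; rewrite addC addr0.
    + by move=> x ->; rewrite oppC oppr0.
    + by move=> x a -> _; rewrite act0.
    + move=> x ->; exists 0%N, (fun _ => C 0); split; last by symmetry; exact: zsum0.
      by move=> i; split => //; split; [apply: degQ0 | rewrite act0].
  - move=> _ /= [[y ->] hye]; rewrite actC in hye.
    have hy : C y = C 0 by rewrite -hye; apply/CE; rewrite subr0; apply: IMl; apply: Ie.
    by exists 0%N => a _ _; rewrite hy act0.
  - move=> x ->; split.
    + by split; [exists 0 | rewrite /= act0].
    + by split; [exists 0 | rewrite /= act0].
    + rewrite /map_e /= act0; split; first by rewrite /= sub00; split; [exists 0 | rewrite act0].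
      by exists 0%N => a _ _; rewrite /= sub00 act0.
have [P3 [_ cot hP3]] := faith Q Q hQ hQ _ _ _ _ tr1 tr2 teq.
have [n0 hn0] := cot (C 1) (ex_intro _ 1 erefl).
exists n0 => b hb.
have := hn0 b (corner1 b) hb; rewrite /= actC mul1r => /hP3 [_ _ [_ [m hm]]].
exists m => c hc; have := hm c (corner1 c) hc.
rewrite /msub /= oppC oppr0 addC addr0 actC => /CE.
by rewrite subr0.
Qed.

End Main.

Theorem lemma3p17 (k : closedFieldType) (A : algType k)
  (Ad : nat -> A -> Prop) (e : A) :
  is_grading Ad ->
  right_noetherian_corner (1 : A) ->
  e * e = e -> Ad 0%N e ->
  right_noetherian_corner e ->
  (* Ae is in grmod eAe *)
  (exists (n : nat) (g : nat -> A), (forall i, g i * e = g i) /\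
     forall x, x * e = x -> exists c : nat -> A,
       (forall i, corner e (c i)) /\ x = \sum_(i < n) g i * c i) ->
  tails_e_equivalence Ad e ->
  (* A/(e) is a torsion right A-module *)
  forall a : A, exists n : nat, forall b : A, geq_part Ad n b -> ideal_gen e (a * b).
Proof.
move=> hgr noeth _ he0 _ _ heq a.
have [N hN] := bounded _ _ _ e hgr noeth (key _ _ _ _ hgr he0 heq).
by exists N => b hb; apply: IMl; apply: hN.
Qed.
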